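(* Let $\mathcal L>0$, $m_\pm>0$, $\rho_\pm>0$, $S_+<0<S_-$, $\lambda_\pm=\sqrt{\rho_\pm/m_\pm}$, and $S_I=0$. Consider the ODE system $\dot q_1=\mathcal H_1^{\rm p}(q_1,q_2)$, $\dot q_2=\mathcal H_2^{\rm p}(q_1,q_2)$ with \[ \mathcal H_1^{\rm p}(q_1,q_2)=\tfrac12\Big(-\tfrac{S_+}{\rho_+}m_+\lambda_+\tanh\big(\lambda_+\tfrac{q_2-q_1}{2}\big)-\tfrac{S_-}{\rho_-}m_-\lambda_-\tanh(\lambda_-q_1)-S_I\Big), \] \[ \mathcal H_2^{\rm p}(q_1,q_2)=\tfrac12\Big(\tfrac{S_+}{\rho_+}m_+\lambda_+\tanh\big(\lambda_+\tfrac{q_2-q_1}{2}\big)+\tfrac{S_-}{\rho_-}m_-\lambda_-\tanh(\lambda_-(\mathcal L-q_2))+S_I\Big). \] Then the triangular set $\mathcal T=\{(q_1,q_2)\in\mathbb R^2: 0\le q_2\le\mathcal L,\ 0\le q_1\le q_2\}$ is invariant for this system: if $(q_1(0),q_2(0))\in\mathcal T$, then any solution $(q_1(t),q_2(t))_{t>0}$ emanating from it satisfies $(q_1(t),q_2(t))\in\mathcal T$ for all $t>0$.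
   Context: This ODE system describes the motion of the two interfaces $z=q_1(t)<z=q_2(t)$ of a flat layer $\Omega_+=(q_1,q_2)\times(0,\tilde{\mathcal L})^{d-1}$ in $(0,\mathcal L)\times(0,\tilde{\mathcal L})^{d-1}$ for the chemically active Mullins--Sekerka problem. *)

(* Defs.v *)
From Stdlib Require Import Reals.
From Coquelicot Require Import Coquelicot.
Open Scope R_scope.

Definition tanh (x : R) : R := (exp x - exp (- x)) / (exp x + exp (- x)).

Definition lam (rho m : R) : R := sqrt (rho / m).

(* H_1^p and H_2^p; parameters: L, m_+, m_-, rho_+, rho_-, S_+, S_-, S_I *)
Definition H1p (L mp mm rhop rhom Sp Sm SI q1 q2 : R) : R :=
  / 2 * (- (Sp / rhop) * mp * lam rhop mp * tanh (lam rhop mp * ((q2 - q1) / 2))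
         - (Sm / rhom) * mm * lam rhom mm * tanh (lam rhom mm * q1)
         - SI).

Definition H2p (L mp mm rhop rhom Sp Sm SI q1 q2 : R) : R :=
  / 2 * ((Sp / rhop) * mp * lam rhop mp * tanh (lam rhop mp * ((q2 - q1) / 2))
         + (Sm / rhom) * mm * lam rhom mm * tanh (lam rhom mm * (L - q2))
         + SI).

Definition inT (L q1 q2 : R) : Prop := 0 <= q2 <= L /\ 0 <= q1 <= q2.

(* Main.v *)
Require Import Defs.
From Stdlib Require Import Reals Lra Psatz.
From Coquelicot Require Import Coquelicot.
Open Scope R_scope.

Definition gg (x : R) := Rmin x 0 * Rmin x 0.

Lemma gg_bound x h : Rabs (gg (x + h) - gg x - 2 * Rmin x 0 * h) <= h * h.
Proof.
unfold gg, Rmin.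
destruct (Rle_dec (x+h) 0); destruct (Rle_dec x 0); apply Rabs_le; nra.
Qed.

Lemma gg_derive x : is_derive gg x (2 * Rmin x 0).
Proof.
apply is_derive_Reals. intros eps he.
exists (mkposreal eps he). intros h hn hh. simpl in hh.
pose proof (gg_bound x h) as B.
replace ((gg (x + h) - gg x) / h - 2 * Rmin x 0) with ((gg (x + h) - gg x - 2 * Rmin x 0 * h) / h) by (field; auto).
unfold Rdiv. rewrite Rabs_mult, Rabs_inv.
apply Rle_lt_trans with (Rabs h).
- assert (0 < Rabs h) by (apply Rabs_pos_lt; auto).
  apply Rmult_le_reg_r with (Rabs h); auto.
  rewrite Rmult_assoc, Rinv_l by lra.
  replace (h*h) with (Rabs h * Rabs h) in B. lra.
  rewrite <- Rabs_mult. apply Rabs_pos_eq. nra.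
- auto.
Qed.

Lemma tanh_sign x : Rmin x 0 * Defs.tanh x >= 0.
Proof.
unfold Defs.tanh, Rmin. destruct (Rle_dec x 0).
- pose proof (exp_pos x). pose proof (exp_pos (-x)).
  assert (exp x <= exp (-x)) by (destruct (Req_dec x 0); [subst; rewrite Ropp_0; lra| left; apply exp_increasing; lra]).
  assert ((exp x - exp (- x)) / (exp x + exp (- x)) <= 0).
  { unfold Rdiv. apply Rmult_le_0_r; [lra|]. left; apply Rinv_0_lt_compat; lra. }
  set (T := (exp x - exp (- x)) / (exp x + exp (- x))) in *. nra.
- lra.
Qed.

Lemma tanh_lb x : 2 * Rmin x 0 <= Defs.tanh x.
Proof.
unfold Defs.tanh, Rmin. pose proof (exp_pos x) as p. pose proof (exp_pos (-x)) as q.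
assert (pq : exp x * exp (-x) = 1) by (rewrite <- exp_plus; replace (x + -x) with 0 by ring; apply exp_0).
destruct (Rle_dec x 0).
- assert (e2 : exp x * exp x = exp (2*x)) by (rewrite <- exp_plus; f_equal; ring).
  pose proof (exp_ineq1_le (2*x)).
  assert (exp x <= 1) by (destruct (Req_dec x 0); [subst; rewrite exp_0; lra| left; rewrite <- exp_0; apply exp_increasing; lra]).
  apply Rmult_le_reg_r with (exp x + exp (-x)); [lra|].
  replace ((exp x - exp (- x)) / (exp x + exp (- x)) * (exp x + exp (- x))) with (exp x - exp (-x)) by (field; lra).
  apply Rmult_le_reg_l with (exp x); [lra|].
  nra.
- assert (exp (-x) <= exp x) by (left; apply exp_increasing; lra).
  rewrite Rmult_0_r. unfold Rdiv. apply Rmult_le_pos; [lra|]. left; apply Rinv_0_lt_compat; lra.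
Qed.
Lemma tanh_scaled c x : 0 < c -> Rmin x 0 * Defs.tanh (c*x) >= 0 /\ 2*c*Rmin x 0 <= Defs.tanh (c*x).
Proof.
intro hc.
assert (E : Rmin (c*x) 0 = c * Rmin x 0).
{ unfold Rmin. destruct (Rle_dec (c*x) 0); destruct (Rle_dec x 0); try ring; exfalso; nra. }
pose proof (tanh_sign (c*x)) as A. pose proof (tanh_lb (c*x)) as B. rewrite E in A, B.
split; [|lra].
set (T := Defs.tanh (c*x)) in *.
assert (c * (Rmin x 0 * T) >= 0) by (rewrite <- Rmult_assoc; exact A).
destruct (Rle_dec 0 (Rmin x 0 * T)). lra. exfalso. nra.
Qed.

Lemma mneg x y z : x <= 0 -> y <= z -> x*z <= x*y.
Proof. intros. apply Rmult_le_compat_neg_l; auto. Qed.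

Lemma key (a B lp lm n1 n2 n3 T1 T2 T3 : R) :
  0 <= a -> 0 <= B -> 0 <= lp -> 0 <= lm -> n1 <= 0 -> n2 <= 0 -> n3 <= 0 ->
  n1*T1 >= 0 -> n2*T2 >= 0 -> n3*T3 >= 0 ->
  lp*n3 <= T3 -> 2*lm*n1 <= T1 -> 2*lm*n2 <= T2 ->
  n1*(a*T3 - B*T1) + n2*(a*T3 - B*T2) + n3*(-2*a*T3 + B*T2 + B*T1)
  <= (a*lp + 2*B*lm) * (n1*n1 + n2*n2 + n3*n3).
Proof.
intros.
assert (h1 : n1*a*T3 <= a*lp*(n1*n3)).
{ assert (n1*a <= 0) by nra. replace (a*lp*(n1*n3)) with ((n1*a)*(lp*n3)) by ring. apply mneg; lra. }
assert (h2 : n2*a*T3 <= a*lp*(n2*n3)).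
{ assert (n2*a <= 0) by nra. replace (a*lp*(n2*n3)) with ((n2*a)*(lp*n3)) by ring. apply mneg; lra. }
assert (h3 : n3*B*T2 <= 2*B*lm*(n3*n2)).
{ assert (n3*B <= 0) by nra. replace (2*B*lm*(n3*n2)) with ((n3*B)*(2*lm*n2)) by ring. apply mneg; lra. }
assert (h4 : n3*B*T1 <= 2*B*lm*(n3*n1)).
{ assert (n3*B <= 0) by nra. replace (2*B*lm*(n3*n1)) with ((n3*B)*(2*lm*n1)) by ring. apply mneg; lra. }
assert (h5 : 0 <= B * (n1*T1)) by nra.
assert (h6 : 0 <= B * (n2*T2)) by nra.
assert (h7 : 0 <= a * (n3*T3)) by nra.
assert (h8 : 0 <= a*lp) by nra. assert (h9 : 0 <= B*lm) by nra.
assert (h10 : n1*n3 + n2*n3 <= n1*n1+n2*n2+n3*n3) by (pose proof (Rle_0_sqr (n1-n3)); pose proof (Rle_0_sqr (n2-n3)); unfold Rsqr in *; nra).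
assert (h11 : 0 <= n1*n3) by nra. assert (h12 : 0 <= n2*n3) by nra.
assert ((a*lp)*(n1*n3+n2*n3) <= (a*lp)*(n1*n1+n2*n2+n3*n3)) by (apply Rmult_le_compat_l; lra).
assert ((B*lm)*(n1*n3+n2*n3) <= (B*lm)*(n1*n1+n2*n2+n3*n3)) by (apply Rmult_le_compat_l; lra).
nra.
Qed.

Lemma gg_small y y0 : 0 <= y0 -> gg y <= (y - y0) * (y - y0).
Proof. intros; unfold gg, Rmin; pose proof (Rle_0_sqr (y-y0)); unfold Rsqr in *; destruct (Rle_dec y 0). assert (0 <= -y*y0) by (apply Rmult_le_pos; lra). nra. lra. Qed.

Lemma gg_nonneg y : 0 <= gg y.
Proof. unfold gg; nra. Qed.

Lemma gg_zero y : gg y <= 0 -> 0 <= y.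
Proof. unfold gg, Rmin; destruct (Rle_dec y 0); intros; nra. Qed.

Theorem proposition4p1 (L mp mm rhop rhom Sp Sm SI : R)
  (hL : 0 < L) (hmp : 0 < mp) (hmm : 0 < mm) (hrhop : 0 < rhop) (hrhom : 0 < rhom)
  (hSp : Sp < 0) (hSm : 0 < Sm) (hSI : SI = 0)
  (q1 q2 : R -> R)
  (c1 : filterlim q1 (at_right 0) (locally (q1 0)))
  (c2 : filterlim q2 (at_right 0) (locally (q2 0)))
  (d1 : forall t, 0 < t -> is_derive q1 t (H1p L mp mm rhop rhom Sp Sm SI (q1 t) (q2 t)))
  (d2 : forall t, 0 < t -> is_derive q2 t (H2p L mp mm rhop rhom Sp Sm SI (q1 t) (q2 t)))
  (h0 : inT L (q1 0) (q2 0)) :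
  forall t, 0 < t -> inT L (q1 t) (q2 t).
Proof.
intros t ht.
set (lp := lam rhop mp). set (lm := lam rhom mm).
assert (hlp : 0 < lp) by (apply sqrt_lt_R0; unfold Rdiv; apply Rmult_lt_0_compat; [lra|apply Rinv_0_lt_compat; lra]).
assert (hlm : 0 < lm) by (apply sqrt_lt_R0; unfold Rdiv; apply Rmult_lt_0_compat; [lra|apply Rinv_0_lt_compat; lra]).
set (a := -(Sp/rhop)*mp*lp). set (B := (Sm/rhom)*mm*lm).
assert (ha : 0 <= a).
{ unfold a. assert (Sp/rhop < 0). { unfold Rdiv. assert (0 < /rhop) by (apply Rinv_0_lt_compat; lra). nra. }
  assert (0 < - (Sp/rhop) * mp) by nra. nra. }
assert (hB : 0 <= B).
{ unfold B. assert (0 < Sm/rhom). { unfold Rdiv. assert (0 < /rhom) by (apply Rinv_0_lt_compat; lra). nra. }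
  assert (0 < (Sm/rhom) * mm) by nra. nra. }
set (K := a*lp + 2*B*lm).
set (V := fun s => gg (q1 s) + gg (L - q2 s) + gg (q2 s - q1 s)).
set (W := fun s => V s * exp (-K * s)).
set (H1 := fun s => H1p L mp mm rhop rhom Sp Sm SI (q1 s) (q2 s)).
set (H2 := fun s => H2p L mp mm rhop rhom Sp Sm SI (q1 s) (q2 s)).
set (D := fun s => 2 * Rmin (q1 s) 0 * H1 s + 2 * Rmin (L - q2 s) 0 * (0 - H2 s)
                   + 2 * Rmin (q2 s - q1 s) 0 * (H2 s - H1 s)).
set (dW := fun s => D s * exp (-K*s) + V s * (-K * exp (-K*s))).
assert (dV : forall s, 0 < s -> is_derive V s (D s)).
{ intros s hs.
  pose proof (is_derive_comp gg q1 s _ _ (gg_derive _) (d1 s hs)) as X1.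
  pose proof (is_derive_minus (fun _ => L) q2 s _ _ (is_derive_const L s) (d2 s hs)) as Y2.
  pose proof (is_derive_comp gg _ s _ _ (gg_derive _) Y2) as X2.
  pose proof (is_derive_minus q2 q1 s _ _ (d2 s hs) (d1 s hs)) as Y3.
  pose proof (is_derive_comp gg _ s _ _ (gg_derive _) Y3) as X3.
  pose proof (is_derive_plus _ _ _ _ _ (is_derive_plus _ _ _ _ _ X1 X2) X3) as X.
  match type of X with is_derive _ _ ?l => replace (D s) with l end.
  exact X.
  unfold D, H1, H2, plus, scal, minus, mult, opp, zero; simpl. repeat change (plus ?x ?y) with (Rplus x y); repeat change (mult ?x ?y) with (Rmult x y). unfold Rminus. ring. }
assert (dWd : forall s, 0 < s -> is_derive W s (dW s)).
{ intros s hs.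
  pose proof (is_derive_scal (fun x => x) s (-K) 1 (is_derive_id s)) as Y.
  pose proof (is_derive_comp exp (fun x => -K * x) s _ _ (is_derive_exp _) Y) as E.
  pose proof (is_derive_mult V _ s _ _ (dV s hs) E (fun x y => Rmult_comm x y)) as X.
  match type of X with is_derive _ _ ?l => replace (dW s) with l end.
  exact X.
  unfold dW. repeat change (plus ?x ?y) with (Rplus x y); repeat change (mult ?x ?y) with (Rmult x y);
  repeat change (scal ?x ?y) with (Rmult x y). match goal with |- ?u = ?v => change (@eq R u v) end. ring. }
assert (dWneg : forall s, 0 < s -> dW s <= 0).
{ intros s hs.
  assert (DK : D s <= K * V s).
  { destruct (tanh_scaled lm (q1 s) hlm) as [F1 G1].
    destruct (tanh_scaled lm (L - q2 s) hlm) as [F2 G2].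
    assert (hlp2 : 0 < lp/2) by lra.
    destruct (tanh_scaled (lp/2) (q2 s - q1 s) hlp2) as [F3 G3].
    replace ((lp/2) * (q2 s - q1 s)) with (lp * ((q2 s - q1 s)/2)) in F3, G3 by field.
    assert (Hk := key a B lp lm (Rmin (q1 s) 0) (Rmin (L - q2 s) 0) (Rmin (q2 s - q1 s) 0)
       _ _ _ ha hB (Rlt_le _ _ hlp) (Rlt_le _ _ hlm) (Rmin_r _ _) (Rmin_r _ _) (Rmin_r _ _) F1 F2 F3).
    replace (2 * (lp/2) * Rmin (q2 s - q1 s) 0) with (lp * Rmin (q2 s - q1 s) 0) in G3 by field.
    specialize (Hk G3 G1 G2).
    unfold D, V, K, H1, H2, H1p, H2p, gg. rewrite hSI. fold lp lm.
    unfold a, B in *.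
    match goal with |- ?l <= _ => match type of Hk with ?l' <= _ => replace l with l' by (field; lra) end end.
    lra. }
  unfold dW. pose proof (exp_pos (-K*s)).
  assert (0 <= V s) by (unfold V; pose proof (gg_nonneg (q1 s)); pose proof (gg_nonneg (L - q2 s)); pose proof (gg_nonneg (q2 s - q1 s)); lra).
  replace (D s * exp (- K * s) + V s * (- K * exp (- K * s))) with ((D s - K * V s) * exp (-K*s)) by ring.
  apply Rmult_le_0_r; lra. }
assert (mono : forall s, 0 < s -> s < t -> W t <= W s).
{ intros s hs hst.
  assert (H := MVT_gen W s t dW). cbv zeta in H.
  rewrite Rmin_left, Rmax_right in H by lra.
  destruct H as [c [hc e]].
  - intros x hx; apply dWd; lra.
  - intros x hx. apply continuity_pt_filterlim. apply (ex_derive_continuous W).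
    exists (dW x); apply dWd; lra.
  - pose proof (dWneg c ltac:(lra)). nra. }
assert (KK : 0 <= K).
{ unfold K. pose proof (Rmult_le_pos _ _ ha (Rlt_le _ _ hlp)). pose proof (Rmult_le_pos _ _ hB (Rlt_le _ _ hlm)). lra. }
assert (Vnn : forall s, 0 <= V s).
{ intros s; unfold V; pose proof (gg_nonneg (q1 s)); pose proof (gg_nonneg (L - q2 s)); pose proof (gg_nonneg (q2 s - q1 s)); lra. }
assert (Wt : W t <= 0).
{ destruct (Rle_dec (W t) 0) as [ok|nok]; [exact ok|exfalso].
  set (e := Rmin 1 (W t / 12)).
  assert (he : 0 < e) by (unfold e; apply Rmin_pos; lra).
  assert (he1 : e <= 1) by (unfold e; apply Rmin_l).
  assert (he2 : e <= W t / 12) by (unfold e; apply Rmin_r).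
  assert (F1 : at_right 0 (fun x => ball (q1 0) (mkposreal e he) (q1 x))) by exact (c1 _ (locally_ball (q1 0) (mkposreal e he))).
  assert (F2 : at_right 0 (fun x => ball (q2 0) (mkposreal e he) (q2 x))) by exact (c2 _ (locally_ball (q2 0) (mkposreal e he))).
  destruct (filter_and _ _ F1 F2) as [delta Hd].
  set (s := Rmin (delta/2) (t/2)).
  assert (hd := cond_pos delta).
  assert (hs0 : 0 < s) by (unfold s; apply Rmin_pos; lra).
  assert (hs1 : s <= delta/2) by (unfold s; apply Rmin_l).
  assert (hs2 : s <= t/2) by (unfold s; apply Rmin_r).
  assert (hb : ball 0 delta s).
  { unfold ball; simpl. unfold AbsRing_ball, abs, minus, plus, opp; simpl.
    rewrite Ropp_0, Rplus_0_r, Rabs_pos_eq by lra. lra. }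
  destruct (Hd s hb hs0) as [B1 B2].
  unfold ball in B1, B2; simpl in B1, B2. unfold AbsRing_ball, abs, minus, plus, opp in B1, B2; simpl in B1, B2.
  apply Rabs_def2 in B1. apply Rabs_def2 in B2.
  destruct h0 as [[h01 h02] [h03 h04]].
  assert (V s <= W t / 2).
  { unfold V.
    pose proof (gg_small (q1 s) (q1 0) h03).
    pose proof (gg_small (L - q2 s) (L - q2 0) ltac:(lra)).
    pose proof (gg_small (q2 s - q1 s) (q2 0 - q1 0) ltac:(lra)).
    simpl in B1, B2.
    assert ((q1 s - q1 0) * (q1 s - q1 0) <= e*e) by nra.
    assert ((L - q2 s - (L - q2 0)) * (L - q2 s - (L - q2 0)) <= e*e) by nra.
    assert ((q2 s - q1 s - (q2 0 - q1 0)) * (q2 s - q1 s - (q2 0 - q1 0)) <= 4*(e*e)) by nra.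
    nra. }
  assert (W s <= V s).
  { unfold W. assert (exp (-K*s) <= 1).
    { rewrite <- exp_0. destruct (Req_dec (-K*s) 0) as [z|z]. rewrite z; lra.
      left; apply exp_increasing. nra. }
    pose proof (Vnn s). pose proof (exp_pos (-K*s)). nra. }
  pose proof (mono s hs0 ltac:(lra)). lra. }
assert (Vt : V t <= 0).
{ unfold W in Wt. pose proof (exp_pos (-K*t)). pose proof (Vnn t).
  destruct (Rle_dec (V t) 0); auto. nra. }
unfold V in Vt.
pose proof (gg_nonneg (q1 t)); pose proof (gg_nonneg (L - q2 t)); pose proof (gg_nonneg (q2 t - q1 t)).
assert (z1 := gg_zero (q1 t) ltac:(lra)).
assert (z2 := gg_zero (L - q2 t) ltac:(lra)).
assert (z3 := gg_zero (q2 t - q1 t) ltac:(lra)).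
unfold inT; lra.
Qed.
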